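(* Let $h_1,\dots,h_r\in\mathbb{R}^n$, $b_1,\dots,b_r\in\mathbb{R}$, $V_1,\dots,V_s\in\mathbb{R}^{n\times n}$, $v_1,\dots,v_s\in\mathbb{R}$, and define the polyhedra $$S=\{x\in\mathbb{R}^n \mid h_i^Tx\le b_i,\ i=1,\dots,r\},\qquad U_0=\{A\in\mathbb{R}^{n\times n}\mid \mathrm{Tr}(V_j^TA)\le v_j,\ j=1,\dots,s\}.$$ Let $A_\star\in U_0$, let $x_1,\dots,x_m\in\mathbb{R}^n$, let $y_k=A_\star x_k$ for $k=1,\dots,m$, let $U_m=\{A\in U_0\mid Ax_k=y_k,\ k=1,\dots,m\}$ and let $c\in\mathbb{R}^n$. Consider the problem $$\text{(P)}\qquad \min_{x\in\mathbb{R}^n}\ c^Tx\quad \text{s.t. } x\in S,\quad Ax\in S\ \ \forall A\in U_m,$$ and the linear program, in the variables $x\in\mathbb{R}^n$, $\mu^{(i)}=(\mu^{(i)}_1,\dots,\mu^{(i)}_s)\in\mathbb{R}^s$ and $\eta_k^{(i)}\in\mathbb{R}^n$ ($i=1,\dots,r$, $k=1,\dots,m$), $$\text{(Q)}\qquad \begin{aligned}\min\quad & c^Tx\\ \text{s.t.}\quad & h_i^Tx\le b_i, && i=1,\dots,r,\\ & \textstyle\sum_{k=1}^m y_k^T\eta_k^{(i)}+\sum_{j=1}^s\mu_j^{(i)}v_j\le b_i, && i=1,\dots,r,\\ & \textstyle x h_i^T=\sum_{k=1}^m x_k\eta_k^{(i)T}+\sum_{j=1}^s \mu_j^{(i)}V_j^T,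 && i=1,\dots,r,\\ & \mu^{(i)}\ge 0, && i=1,\dots,r.\end{aligned}$$ Then the feasible set of (P) equals the projection onto $x$-space of the feasible set of (Q). In particular, the optimal values of (P) and (Q) are equal, and the optimal solutions of (P) are exactly the projections onto $x$-space of the optimal solutions of (Q).
   Context: Setting: an unknown linear dynamical system $x_{t+1}=A_\star x_t$ whose matrix $A_\star$ is known to lie in the polyhedral uncertainty set $U_0$; the measurements $(x_k,y_k)$ are the observed one-step transitions. Problem (P) asks for the cheapest point that stays in the safety region $S$ for one step under every matrix consistent with $U_0$ and the measurements. *)

(* Defs.v *)
From HB Require Import structures.
From mathcomp Require Import all_boot all_order all_algebra.
From mathcomp Require Import all_classical all_reals all_analysis.
Set Implicit Arguments. Unset Strict Implicit. Unset Printing Implicit Defensive.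
Import Order.TTheory GRing.Theory Num.Theory.
Local Open Scope ring_scope.
Local Open Scope classical_set_scope.

Section Defs.
Variable R : realType.
Variables n r s m : nat.

Definition dotv (u w : 'cV[R]_n) : R := (u^T *m w) 0 0.

Definition safe_set (h : 'I_r -> 'cV[R]_n) (b : 'I_r -> R) : set 'cV[R]_n :=
  [set x | forall i, dotv (h i) x <= b i].

Definition U0_set (V : 'I_s -> 'M[R]_n) (v : 'I_s -> R) : set 'M[R]_n :=
  [set A | forall j, \tr ((V j)^T *m A) <= v j].

Definition Um_set (V : 'I_s -> 'M[R]_n) (v : 'I_s -> R)
  (xs ys : 'I_m -> 'cV[R]_n) : set 'M[R]_n :=
  [set A | U0_set V v A /\ forall k, A *m xs k = ys k].

Definition feasP h b V v xs ys : set 'cV[R]_n :=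
  [set x | safe_set h b x /\ forall A, Um_set V v xs ys A -> safe_set h b (A *m x)].

(* decision variables of (Q): (x, (mu, eta)) with mu i j = mu^{(i)}_j
   and eta i k = eta^{(i)}_k *)
Definition Qvar := ('cV[R]_n * (('I_r -> 'I_s -> R) * ('I_r -> 'I_m -> 'cV[R]_n)))%type.

Definition feasQ (h : 'I_r -> 'cV[R]_n) (b : 'I_r -> R)
  (V : 'I_s -> 'M[R]_n) (v : 'I_s -> R) (xs ys : 'I_m -> 'cV[R]_n) : set Qvar :=
  [set z | let x := z.1 in let mu := z.2.1 in let eta := z.2.2 in
     (forall i, dotv (h i) x <= b i) /\
     (forall i, \sum_(k < m) dotv (ys k) (eta i k) + \sum_(j < s) mu i j * v j <= b i) /\
     (forall i, x *m (h i)^T =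
                \sum_(k < m) xs k *m (eta i k)^T + \sum_(j < s) mu i j *: (V j)^T) /\
     (forall i j, 0 <= mu i j)].

Definition argmin_on (T : Type) (F : set T) (f : T -> R) : set T :=
  [set z | F z /\ forall z', F z' -> f z <= f z'].

(* optimal value (infimum in the extended reals; +oo if infeasible) *)
Definition optval (T : Type) (F : set T) (f : T -> R) : \bar R :=
  ereal_inf [set (f z)%:E | z in F].

End Defs.

(* Main.v *)
Require Import Defs.
From HB Require Import structures.
From mathcomp Require Import all_boot all_order all_algebra ring lra.
From mathcomp Require Import all_classical all_reals all_analysis.
Import Order.TTheory GRing.Theory Num.Theory.
Local Open Scope ring_scope.
Local Open Scope classical_set_scope.

Lemma liftW (p : nat) (i : 'I_p) : lift ord_max i = widen_ord (leqnSn p) i.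
Proof. apply: val_inj; rewrite /= /bump. by case: leqP => // H; move: (ltn_ord i); rewrite ltnNge H. Qed.

Lemma ext_lam {R : Type} {p : nat} (lam : 'I_p -> R) (t : R) :
  exists L : 'I_p.+1 -> R, (forall i, L (widen_ord (leqnSn p) i) = lam i) /\ L ord_max = t.
Proof.
exists (fun l => oapp lam t (unlift ord_max l)); split.
  by move=> i; rewrite -liftW liftK.
by rewrite unlift_none.
Qed.

Lemma farkas_hom (R : realFieldType) (V : lmodType R) (pr : V -> V -> R)
  (prDl : forall a u v w, pr (a *: u + v) w = a * pr u w + pr v w)
  (prDr : forall a u v w, pr w (a *: u + v) = a * pr w u + pr w v)
  (prpos : forall d, d != 0 -> exists w, 0 < pr d w)
  (p : nat) (c : 'I_p -> V) (d : V) :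
  ~ (exists lam : 'I_p -> R, (forall l, 0 <= lam l) /\ d = \sum_l lam l *: c l) ->
  exists w, (forall l, pr (c l) w <= 0) /\ 0 < pr d w.
Proof.
have prBl u a v w : pr (u - a *: v) w = pr u w - a * pr v w.
  by rewrite addrC -scaleNr prDl mulNr addrC.
have prBr u a v w : pr w (u - a *: v) = pr w u - a * pr w v.
  by rewrite addrC -scaleNr prDr mulNr addrC.
elim: p c d => [|p IH] c d Hn.
  have d0 : d != 0.
    apply/negP => /eqP d0; apply: Hn; exists (fun _ => 0); split => // .
    by rewrite big_ord0.
  have [w Hw] := prpos d d0; exists w; split => //; by case.
pose c' := fun i => c (widen_ord (leqnSn p) i).
pose cl := c ord_max.
have Hn' : ~ (exists lam : 'I_p -> R, (forall l, 0 <= lam l) /\ d = \sum_l lam l *: c' l).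
  move=> [lam [lam0 Hd]]; apply: Hn.
  have [L [L1 L2]] := ext_lam lam 0.
  exists L; split.
    move=> l; case: (unliftP ord_max l) => [j ->|->]; last by rewrite L2.
    by rewrite liftW L1.
  rewrite big_ord_recr /= L2 scale0r addr0 Hd.
  by apply: eq_bigr => i _; rewrite L1.
have [w [Hw1 Hw2]] := IH c' d Hn'.
have [Hcl|Hcl] := lerP (pr cl w) 0.
  exists w; split => // l; case: (unliftP ord_max l) => [j ->|->] //.
  by rewrite liftW; apply: Hw1.
set g := pr cl w.
pose c'' := fun i => c' i - (pr (c' i) w / g) *: cl.
pose d'' := d - (pr d w / g) *: cl.
have Hn'' : ~ (exists lam : 'I_p -> R, (forall l, 0 <= lam l) /\ d'' = \sum_l lam l *: c'' l).
  move=> [lam [lam0 Hd]]; apply: Hn.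
  pose t := pr d w / g - \sum_l lam l * (pr (c' l) w / g).
  have [L [L1 L2]] := ext_lam lam t.
  exists L; split.
    move=> l; case: (unliftP ord_max l) => [j ->|->]; last first.
      rewrite L2 /t subr_ge0; apply: (@le_trans _ _ 0).
        apply: sumr_le0 => i _; apply: mulr_ge0_le0 => //.
        by apply: mulr_le0_ge0; [apply: Hw1| rewrite invr_ge0 ltW].
      by apply: ltW; apply: divr_gt0.
    by rewrite liftW L1.
  rewrite big_ord_recr /= L2.
  have -> : \sum_(i < p) L (widen_ord (leqnSn p) i) *: c (widen_ord (leqnSn p) i)
           = \sum_(i < p) lam i *: c' i by apply: eq_bigr => i _; rewrite L1.
  have : d = d'' + (pr d w / g) *: cl by rewrite /d'' subrK.
  move=> ->; rewrite Hd /c'' /t.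
  under eq_bigr => i _ do rewrite scalerBr scalerA.
  rewrite sumrB scalerBl -scaler_suml /cl.
  by rewrite -addrA [X in _ + X = _]addrC.
have [w' [Hw'1 Hw'2]] := IH c'' d'' Hn''.
have sw a b : a / g * b = b / g * a by rewrite mulrAC [RHS]mulrAC (mulrC a).
exists (w' - (pr cl w' / g) *: w); split.
  move=> l; case: (unliftP ord_max l) => [j ->|->]; last first.
    by rewrite prBr -/cl -/g divfK ?subrr // lt0r_neq0.
  rewrite liftW -/(c' j) prBr.
  by have := Hw'1 j; rewrite /c'' prBl sw.
by rewrite prBr; move: Hw'2; rewrite /d'' prBl sw.
Qed.

Lemma tr_delta (R : comPzRingType) (n : nat) (B : 'M[R]_n) i j :
  \tr (B *m delta_mx i j) = B j i.
Proof.
rewrite /mxtrace (bigD1 j) //= big1 ?addr0.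
  rewrite !mxE (bigD1 i) //= big1 ?addr0 ?mxE ?eqxx ?mulr1 // => k /negbTE Hk.
  by rewrite !mxE Hk mulr0.
move=> k /negbTE Hk; rewrite !mxE big1 // => l _.
by rewrite !mxE Hk andbF mulr0.
Qed.

Definition pr2 {R : realFieldType} {n : nat} (u w : ('M[R]_n * R^o)%type) : R :=
  \tr (u.1^T *m w.1) + u.2 * w.2.

Lemma pr2Dl (R : realFieldType) (n : nat) a (u v w : ('M[R]_n * R^o)%type) :
  pr2 (a *: u + v) w = a * pr2 u w + pr2 v w.
Proof.
rewrite /pr2 /= linearD linearZ /= mulmxDl -scalemxAl mxtraceD mxtraceZ.
rewrite mulrDl mulrDr -mulrA; set x := \tr _. set y := \tr _. 
by rewrite -!addrA; congr (_ + _); rewrite addrCA.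
Qed.

Lemma pr2Dr (R : realFieldType) (n : nat) a (u v w : ('M[R]_n * R^o)%type) :
  pr2 w (a *: u + v) = a * pr2 w u + pr2 w v.
Proof.
rewrite /pr2 /= mulmxDr -scalemxAr mxtraceD mxtraceZ.
change (a *: u.2) with (a * u.2); ring.
Qed.

Lemma pr2pos (R : realFieldType) (n : nat) (d : ('M[R]_n * R^o)%type) :
  d != 0 -> exists w, 0 < pr2 d w.
Proof.
case: d => A a Hd; case: (eqVneq a 0) => [a0|a0]; last first.
  exists (0, a); rewrite /pr2 /= mulmx0 mxtrace0 add0r.
  by rewrite lt_neqAle eq_sym mulf_neq0 //= -expr2 sqr_ge0.
subst a.
have A0 : A != 0 by apply: contraNneq Hd => ->.
have : ~~ [forall i, forall j, A i j == 0].
  apply: contra A0 => /forallP H; apply/eqP/matrixP => i j; rewrite mxE.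
  exact/eqP/(forallP (H i) j).
rewrite negb_forall => /existsP [i]; rewrite negb_forall => /existsP [j Hij].
exists (A i j *: delta_mx i j, 0); rewrite /pr2 /= -scalemxAr mxtraceZ tr_delta mxE mulr0 addr0.
by rewrite lt_neqAle eq_sym mulf_neq0 //= -expr2 sqr_ge0.
Qed.

Lemma fst_sum (R : realFieldType) (n p : nat) (F : 'I_p -> ('M[R]_n * R^o)%type) :
  (\sum_(i < p) F i).1 = \sum_(i < p) (F i).1.
Proof. by elim/big_rec2: _ => //= i x y _ ->. Qed.

Lemma snd_sum (R : realFieldType) (n p : nat) (F : 'I_p -> ('M[R]_n * R^o)%type) :
  (\sum_(i < p) F i).2 = \sum_(i < p) (F i).2.
Proof. by elim/big_rec2: _ => //= i x y _ ->. Qed.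

Lemma farkas_aff (R : realFieldType) n p (a : 'I_p -> 'M[R]_n) (al : 'I_p -> R)
  (g : 'M[R]_n) (be : R) (z0 : 'M[R]_n) :
  (forall l, \tr ((a l)^T *m z0) <= al l) ->
  (forall z, (forall l, \tr ((a l)^T *m z) <= al l) -> \tr (g^T *m z) <= be) ->
  exists lam : 'I_p -> R, (forall l, 0 <= lam l) /\ g = \sum_l lam l *: a l /\
     \sum_l lam l * al l <= be.
Proof.
move=> Hz0 Himp; apply: contrapT => Hno.
pose c : 'I_p.+1 -> ('M[R]_n * R^o)%type :=
  fun l => oapp (fun i => (a i, - al i)) (0, -1) (unlift ord_max l).
have cW i : c (widen_ord (leqnSn p) i) = (a i, - al i) by rewrite /c -liftW liftK.
have cM : c ord_max = (0, -1) by rewrite /c unlift_none.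
pose d : ('M[R]_n * R^o)%type := (g, - be).
have Hnot : ~ (exists lam : 'I_p.+1 -> R, (forall l, 0 <= lam l) /\ d = \sum_l lam l *: c l).
  move=> [lam [lam0 Hs]]; apply: Hno.
  exists (fun i => lam (widen_ord (leqnSn p) i)); split => //.
  have H1 := congr1 fst Hs; have H2 := congr1 snd Hs.
  rewrite fst_sum big_ord_recr /= cM /= in H1.
  rewrite snd_sum big_ord_recr /= cM /= in H2.
  split.
    rewrite H1 scaler0 addr0; apply: eq_bigr => i _; by rewrite cW.
  have E : \sum_(i < p) (lam (widen_ord (leqnSn p) i) *: c (widen_ord (leqnSn p) i)).2
       = - \sum_(i < p) lam (widen_ord (leqnSn p) i) * al i.
    rewrite -sumrN; apply: eq_bigr => i _; rewrite cW /=.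
    by change (lam (widen_ord (leqnSn p) i) * - al i = - (lam (widen_ord (leqnSn p) i) * al i)); rewrite mulrN.
  rewrite E in H2.
  have Hl := lam0 ord_max.
  change (- be = - \sum_(i < p) lam (widen_ord (leqnSn p) i) * al i + lam ord_max * -1) in H2.
  lra.
have [[Z t] [Hc Hd]] := @farkas_hom R _ pr2 (@pr2Dl R n) (@pr2Dr R n) (@pr2pos R n) _ c d Hnot.
have Ha i : \tr ((a i)^T *m Z) <= al i * t.
  have := Hc (widen_ord (leqnSn p) i); rewrite cW /pr2 /=; lra.
have Ht : 0 <= t.
  have := Hc ord_max; rewrite cM /pr2 /= trmx0 mul0mx mxtrace0; lra.
have Hg : be * t < \tr (g^T *m Z) by move: Hd; rewrite /pr2 /=; lra.
case: (ltrgt0P t) Ht => [tpos|//|t0] _.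
  have H1 : forall l, \tr ((a l)^T *m (t^-1 *: Z)) <= al l.
    move=> i; rewrite -scalemxAr mxtraceZ mulrC ler_pdivrMr //; exact: Ha.
  have := Himp _ H1; rewrite -scalemxAr mxtraceZ mulrC ler_pdivrMr //.
  lra.
subst t.
set G := \tr (g^T *m Z).
set G0 := \tr (g^T *m z0).
have HG0 : G0 <= be by apply: Himp.
have Gpos : 0 < G by move: Hg; rewrite mulr0.
pose s := (be - G0 + 1) / G.
have s0 : 0 <= s by rewrite /s divr_ge0 //; [lra | exact: ltW].
have H1 : forall l, \tr ((a l)^T *m (z0 + s *: Z)) <= al l.
  move=> i; rewrite mulmxDr -scalemxAr mxtraceD mxtraceZ.
  have := Ha i; rewrite mulr0 => Hi.
  have := Hz0 i; have : s * \tr ((a i)^T *m Z) <= 0 by apply: mulr_ge0_le0.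
  lra.
have := Himp _ H1.
rewrite mulmxDr -scalemxAr mxtraceD mxtraceZ -/G0 -/G.
have -> : s * G = be - G0 + 1 by rewrite /s divfK // lt0r_neq0.
lra.
Qed.

Lemma farkas_fin (R : realFieldType) n (I : finType) (a : I -> 'M[R]_n) (al : I -> R)
  (g : 'M[R]_n) (be : R) (z0 : 'M[R]_n) :
  (forall l, \tr ((a l)^T *m z0) <= al l) ->
  (forall z, (forall l, \tr ((a l)^T *m z) <= al l) -> \tr (g^T *m z) <= be) ->
  exists lam : I -> R, (forall l, 0 <= lam l) /\ g = \sum_l lam l *: a l /\
     \sum_l lam l * al l <= be.
Proof.
move=> H0 H1.
have H1' : forall z, (forall l : 'I_#|I|, \tr ((a (enum_val l))^T *m z) <= al (enum_val l)) ->
    \tr (g^T *m z) <= be.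
  move=> z Hz; apply: H1 => i; rewrite -(enum_rankK i); exact: Hz.
have [lam [lam0 [Hg Hb]]] := @farkas_aff R n #|I| (fun l => a (enum_val l))
  (fun l => al (enum_val l)) g be z0 (fun l => H0 _) H1'.
exists (fun i => lam (enum_rank i)); split => //; split.
  rewrite Hg (reindex _ (onW_bij _ (@enum_val_bij I))) /=.
  by apply: eq_bigr => i _; rewrite enum_valK.
rewrite (reindex _ (onW_bij _ (@enum_val_bij I))) /=.
by under eq_bigr => i _ do rewrite enum_valK.
Qed.

Lemma dotv_tr (R : realType) (n : nat) (h x : 'cV[R]_n) (A : 'M[R]_n) :
  dotv h (A *m x) = \tr ((x *m h^T) *m A).
Proof. by rewrite /dotv -trace_mx11 mulmxA mxtrace_mulC mulmxA. Qed.

Lemma dotv_delta (R : realType) (n : nat) (t : 'I_n) (w : 'cV[R]_n) :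
  dotv (delta_mx t 0) w = w t 0.
Proof. by rewrite /dotv trmx_delta -rowE mxE. Qed.

Lemma dotvC (R : realType) (n : nat) (u w : 'cV[R]_n) : dotv u w = dotv w u.
Proof.
rewrite /dotv; have -> : w^T *m u = (u^T *m w)^T by rewrite trmx_mul trmxK.
by rewrite [RHS]mxE.
Qed.

Lemma dotv_sum (R : realType) (n p : nat) (u : 'cV[R]_n) (c : 'I_p -> R) (e : 'I_p -> 'cV[R]_n) :
  dotv u (\sum_t c t *: e t) = \sum_t c t * dotv u (e t).
Proof.
rewrite /dotv mulmx_sumr summxE; apply: eq_bigr => t _.
by rewrite -scalemxAr mxE.
Qed.

Lemma sum_pair (T : zmodType) (m n : nat) (G : ('I_m * 'I_n)%type -> T) :
  \sum_kt G kt = \sum_k \sum_t G (k, t).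
Proof. by rewrite pair_bigA; apply: eq_bigr => -[k t]. Qed.

Lemma main_set (R : realType) (n r s m : nat)
  (h : 'I_r -> 'cV[R]_n) (b : 'I_r -> R)
  (V : 'I_s -> 'M[R]_n) (v : 'I_s -> R)
  (Astar : 'M[R]_n) (xs ys : 'I_m -> 'cV[R]_n) :
  U0_set V v Astar ->
  (forall k, ys k = Astar *m xs k) ->
  feasP h b V v xs ys = fst @` feasQ h b V v xs ys.
Proof.
move=> HA Hy.
apply/seteqP; split => x; last first.
  move=> [[x' [mu eta]] [H1 [H2 [H3 H4]]] <-] /=; split; first exact: H1.
  move=> A [HU HAx] i; rewrite dotv_tr H3 mulmxDl mxtraceD !mulmx_suml !raddf_sum /=.
  apply: le_trans (H2 i); apply: lerD.
    by apply: ler_sum => k _; rewrite /= -dotv_tr HAx dotvC.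
  apply: ler_sum => j _; rewrite -scalemxAl mxtraceZ.
  by apply: ler_wpM2l => //; apply: HU.
move=> [Hs Hall].
pose I := ('I_s + ('I_m * 'I_n) + ('I_m * 'I_n))%type.
pose M (kt : 'I_m * 'I_n) : 'M[R]_n := xs kt.1 *m (delta_mx kt.2 0)^T.
pose a : I -> 'M[R]_n := fun l => match l with
  | inl (inl j) => V j | inl (inr kt) => (M kt)^T | inr kt => - (M kt)^T end.
pose al : I -> R := fun l => match l with
  | inl (inl j) => v j | inl (inr kt) => ys kt.1 kt.2 0 | inr kt => - ys kt.1 kt.2 0 end.
have trM (kt : 'I_m * 'I_n) Z : \tr (M kt *m Z) = (Z *m xs kt.1) kt.2 0.
  by rewrite -dotv_delta dotv_tr.
have aE l Z : \tr ((a l)^T *m Z) =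
   match l with
  | inl (inl j) => \tr ((V j)^T *m Z) | inl (inr kt) => (Z *m xs kt.1) kt.2 0
  | inr kt => - (Z *m xs kt.1) kt.2 0 end.
  case: l => [[j|kt]|kt] //=; first by rewrite trmxK trM.
  by rewrite linearN /= trmxK mulNmx raddfN /= trM.
have HF : forall i, exists lam : I -> R, (forall l, 0 <= lam l) /\
    (x *m (h i)^T)^T = \sum_l lam l *: a l /\ \sum_l lam l * al l <= b i.
  move=> i; apply: (@farkas_fin R n I a al _ _ Astar).
    case=> [[j|kt]|kt]; rewrite aE /= -?Hy //; exact: HA.
  move=> Z HZ; rewrite trmxK -dotv_tr.
  apply: (Hall Z _ i); split.
    by move=> j; have := HZ (inl (inl j)); rewrite aE.
  move=> k; apply/matrixP => t j; rewrite (ord1 j).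
  apply/le_anti/andP; split.
    by have := HZ (inl (inr (k, t))); rewrite aE.
  by have := HZ (inr (k, t)); rewrite aE /= lerN2.
case: (choice HF) => L HL.
pose mu i j := L i (inl (inl j)).
pose eta i k := \sum_t (L i (inl (inr (k, t))) - L i (inr (k, t))) *: (delta_mx t 0 : 'cV[R]_n).
exists (x, (mu, eta)) => //.
split => //; split; last split.
- move=> i; have [_ [_ Hb]] := HL i.
  rewrite !big_sumType /= in Hb.
  have E : \sum_(k < m) dotv (ys k) (eta i k) =
      \sum_kt L i (inl (inr kt)) * ys kt.1 kt.2 0 + \sum_kt L i (inr kt) * - ys kt.1 kt.2 0.
    rewrite !sum_pair -big_split /=; apply: eq_bigr => k _.
    rewrite /eta dotv_sum -big_split; apply: eq_bigr => t _ /=.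
    by rewrite dotvC dotv_delta mulrN mulrBl.
  rewrite /= E; rewrite /mu; lra.
- move=> i; have [_ [Hg _]] := HL i.
  have Hg' : x *m (h i)^T = \sum_l L i l *: (a l)^T.
    by rewrite -[LHS]trmxK Hg linear_sum /=; apply: eq_bigr => l _; rewrite linearZ.
  rewrite Hg' !big_sumType /=.
  have E : \sum_(k < m) xs k *m (eta i k)^T =
      \sum_kt L i (inl (inr kt)) *: M kt + \sum_kt L i (inr kt) *: (- M kt)^T^T.
    rewrite !sum_pair -big_split /=; apply: eq_bigr => k _.
    rewrite /eta linear_sum mulmx_sumr -big_split; apply: eq_bigr => t _ /=.
    by rewrite linearZ /= -scalemxAr trmxK scalerN scalerBl.
  rewrite /= E /mu -[LHS]addrA [RHS]addrC; congr (_ + _); congr (_ + _).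
    by apply: eq_bigr => kt _; rewrite trmxK.
  by apply: eq_bigr => kt _; rewrite !trmxK linearN /= trmxK.
- by move=> i j; have [H _] := HL i; apply: H.
Qed.

Theorem theorem1 (R : realType) (n r s m : nat)
  (h : 'I_r -> 'cV[R]_n) (b : 'I_r -> R)
  (V : 'I_s -> 'M[R]_n) (v : 'I_s -> R)
  (Astar : 'M[R]_n) (xs ys : 'I_m -> 'cV[R]_n) (c : 'cV[R]_n) :
  U0_set V v Astar ->
  (forall k, ys k = Astar *m xs k) ->
  feasP h b V v xs ys = fst @` feasQ h b V v xs ys /\
  optval (feasP h b V v xs ys) (dotv c) =
    optval (feasQ h b V v xs ys) (fun z => dotv c z.1) /\
  argmin_on (feasP h b V v xs ys) (dotv c) =
    fst @` argmin_on (feasQ h b V v xs ys) (fun z => dotv c z.1).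
Proof.
move=> HA Hy.
have E := @main_set R n r s m h b V v Astar xs ys HA Hy.
split => //; rewrite E; split.
  rewrite /optval; congr ereal_inf.
  apply/seteqP; split => y.
    by move=> [_ [z Hz <-] <-]; exists z.
  by move=> [z Hz <-]; exists z.1 => //; exists z.
apply/seteqP; split => x.
  move=> [[z Hz <-] Hmin]; exists z => //; split => // z' Hz'.
  by apply: Hmin; exists z'.
move=> [z [Hz Hmin] <-]; split; first by exists z.
by move=> _ [z' Hz' <-]; apply: Hmin.
Qed.
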